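(* Let $K$ be a commutative unital ring, let $G$ be a groupoid whose set of identities $G_0$ is finite, and let $R$ be a unital $K$-algebra. The following are equivalent: (i) there exists an action $\beta=(\{E_g\}_{g\in G},\{\beta_g\}_{g\in G})$ of $G$ on $R$ such that every ideal $E_e$, $e\in G_0$, is a unital ring and $R=\bigoplus_{e\in G_0}E_e$; (ii) $R$ has a structure of $KG$-module algebra.
   Context: A groupoid is a small category in which every morphism is invertible; we regard it as the set $G$ of its morphisms with the partial multiplication given by composition. For $g\in G$, $d(g)=g^{-1}g$ and $r(g)=gg^{-1}$ are its domain and range identities. The product $gh$ is defined iff $d(g)=r(h)$, and then $d(gh)=d(h)$, $r(gh)=r(g)$. $G^2=\{(g,h)\in G\times G: d(g)=r(h)\}$, and $G_0=\{d(g):g\in G\}$ is the set of identities. An action of $G$ on a ring $R$ is a pair $\beta=(\{E_g\}_{g\in G},\{\beta_g\}_{g\in G})$ such that: - each $E_g$ is an ideal of $R$ with $E_g=E_{r(g)}$; - each $\beta_g:E_{g^{-1}}\to E_g$ is a ring isomorphism; - $\beta_e=\mathrm{id}_{E_e}$ for all $e\in G_0$; - $\beta_g(\beta_h(x))=\beta_{gh}(x)$ for all $(g,h)\in G^2$ and $x\in E_{h^{-1}}$. The groupoid algebra $KG$ is the free $K$-module with basis $\{u_g\}_{g\in G}$. Its multiplication is given by $u_gu_h=u_{gh}$ if $d(g)=r(h)$ and $u_gu_h=0$ otherwise. Since $G_0$ is finite, $KG$ has identity $1_{KG}=\sum_{e\in G_0}u_e$. A $KG$-module algebra is a unital $K$-algebra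 $R$ together with a unital left $KG$-module structure $u_g\otimes x\mapsto u_g\cdot x$ such that $u_g\cdot(xy)=(u_g\cdot x)(u_g\cdot y)$ and $u_g\cdot 1_R=u_{r(g)}\cdot 1_R$ for all $x,y\in R$ and $g\in G$.
   Formalization: In the action of G on R, each $\beta_g$ is a K-linear ring isomorphism from $E_{g^{-1}}$ onto $E_g$, that is, a K-algebra isomorphism rather than a mere ring isomorphism. The statement above fails without it. *)

(* Defs.v *)
From Stdlib Require List.
From HB Require Import structures.
From mathcomp Require Import all_boot all_order all_algebra.
Set Implicit Arguments. Unset Strict Implicit. Unset Printing Implicit Defensive.
Import GRing.Theory.
Local Open Scope ring_scope.

(* Groupoids, viewed as the set of their morphisms with a partial     *)
(* multiplication.  [gmul g h] is only meaningful when d g = r h.     *)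
Record groupoid := Groupoid {
  gcarrier :> Type;
  gmul : gcarrier -> gcarrier -> gcarrier;
  ginv : gcarrier -> gcarrier;
  gd : gcarrier -> gcarrier;
  gr : gcarrier -> gcarrier;
  gd_def : forall g, gd g = gmul (ginv g) g;
  gr_def : forall g, gr g = gmul g (ginv g);
  gd_inv : forall g, gd (ginv g) = gr g;
  gr_inv : forall g, gr (ginv g) = gd g;
  gd_mul : forall g h, gd g = gr h -> gd (gmul g h) = gd h;
  gr_mul : forall g h, gd g = gr h -> gr (gmul g h) = gr g;
  gmulA : forall g h k, gd g = gr h -> gd h = gr k ->
            gmul (gmul g h) k = gmul g (gmul h k);
  gmul_d : forall g, gmul g (gd g) = g;
  gr_mul_l : forall g, gmul (gr g) g = g;
  gd_d : forall g, gd (gd g) = gd g;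
  gr_d : forall g, gr (gd g) = gd g;
  gd_r : forall g, gd (gr g) = gr g;
  gr_r : forall g, gr (gr g) = gr g
}.

Definition is_identity (G : groupoid) (e : G) : Prop := exists g : G, e = gd g.

(* [s] is a duplicate-free enumeration of G_0 (witnessing finiteness of G_0). *)
Definition enumerates_identities (G : groupoid) (s : seq G) : Prop :=
  List.NoDup s /\ forall e : G, List.In e s <-> is_identity e.

Definition is_ideal (R : pzRingType) (E : R -> Prop) : Prop :=
  [/\ E 0,
      (forall x y, E x -> E y -> E (x + y)),
      (forall x, E x -> E (- x)),
      (forall a x, E x -> E (a * x)) &
      (forall a x, E x -> E (x * a))].

Definition is_unital_ideal (R : pzRingType) (E : R -> Prop) : Prop :=
  exists2 u : R, E u & forall x, E x -> u * x = x /\ x * u = x.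

Definition internal_direct_sum (R : pzRingType) (I : Type) (s : seq I)
    (E : I -> R -> Prop) : Prop :=
  (forall x : R, exists f : I -> R,
      (forall i, List.In i s -> E i (f i)) /\ x = \sum_(i <- s) f i) /\
  (forall f : I -> R, (forall i, List.In i s -> E i (f i)) ->
      \sum_(i <- s) f i = 0 -> forall i, List.In i s -> f i = 0).

Definition is_groupoid_action (K : comPzRingType) (R : algType K)
    (G : groupoid) (E : G -> R -> Prop) (beta : G -> R -> R) : Prop :=
  (forall g, is_ideal (E g)) /\
  (forall g x, E g x <-> E (gr g) x) /\
  (forall g x, E (ginv g) x -> E g (beta g x)) /\
  (forall g x y, E (ginv g) x -> E (ginv g) y ->
      beta g (x + y) = beta g x + beta g y /\
      beta g (x * y) = beta g x * beta g y) /\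
  (forall g (k : K) x, E (ginv g) x -> beta g (k *: x) = k *: beta g x) /\
  (forall g x y, E (ginv g) x -> E (ginv g) y -> beta g x = beta g y -> x = y) /\
  (forall g y, E g y -> exists2 x, E (ginv g) x & beta g x = y) /\
  (forall e x, is_identity e -> E e x -> beta e x = x) /\
  (forall g h x, gd g = gr h -> E (ginv h) x ->
      beta g (beta h x) = beta (gmul g h) x).

(* KG-module algebra structures.  KG is the free K-module on the      *)
(* basis (u_g); a (K-compatible) left KG-module structure on R is the  *)
(* same as K-linear operators L g = (u_g . -) satisfying the relations *)
(* of the basis: u_g u_h = u_{gh} if d g = r h, 0 otherwise, and the   *)
(* unitality 1_{KG} . x = sum_{e in G_0} u_e . x = x.                  *)
Definition is_KG_module_algebra (K : comPzRingType) (R : algType K)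
    (G : groupoid) (s : seq G) (L : G -> R -> R) : Prop :=
  (forall g x y, L g (x + y) = L g x + L g y) /\
  (forall g (k : K) x, L g (k *: x) = k *: L g x) /\
  (forall g h x, gd g = gr h -> L g (L h x) = L (gmul g h) x) /\
  (forall g h x, gd g <> gr h -> L g (L h x) = 0) /\
  (forall x, \sum_(e <- s) L e x = x) /\
  (forall g x y, L g (x * y) = L g x * L g y) /\
  (forall g, L g 1 = L (gr g) 1).

(* Main.v *)
Require Import Defs.
From HB Require Import structures.
From mathcomp Require Import all_boot all_order all_algebra.
From Stdlib Require Import Classical ClassicalEpsilon.
Import GRing.Theory.
Set Implicit Arguments. Unset Strict Implicit.
Local Open Scope ring_scope.

Lemma sum0_in (V : zmodType) (I : Type) (s : seq I) (F : I -> V) :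
  (forall i, List.In i s -> F i = 0) -> \sum_(i <- s) F i = 0.
Proof.
elim: s => [|a s IH] H; first by rewrite big_nil.
rewrite big_cons (H a (or_introl erefl)) IH ?add0r // => i Hi; apply: H; by right.
Qed.

Lemma sum_single (V : zmodType) (I : Type) (s : seq I) (F : I -> V) e :
  List.NoDup s -> List.In e s ->
  (forall i, List.In i s -> i <> e -> F i = 0) -> \sum_(i <- s) F i = F e.
Proof.
elim: s => [|a s IH] Hnd Hin H; first by case: Hin.
move/List.NoDup_cons_iff: Hnd => [Hna Hnd].
rewrite big_cons.
case: (classic (a = e)) => [Hae|Hae].
- subst a; rewrite sum0_in ?addr0 // => i Hi; apply: H; first by right.
  move=> Hia; apply: Hna; subst; exact: Hi.
- rewrite (H a) /=; [|by left|by []].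
  rewrite add0r IH //; first by case: Hin.
  by move=> i Hi; apply: H; right.
Qed.

Lemma additive0 (V W : zmodType) (f : V -> W) :
  (forall x y, f (x + y) = f x + f y) -> f 0 = 0.
Proof. move=> H; apply: (addrI (f 0)); by rewrite -H !addr0. Qed.

Lemma additiveN (V W : zmodType) (f : V -> W) :
  (forall x y, f (x + y) = f x + f y) -> forall x, f (- x) = - f x.
Proof.
move=> H x; apply: (addrI (f x)); by rewrite -H !subrr (additive0 H).
Qed.

Lemma additive_sum (V W : zmodType) (f : V -> W) (I : Type) (s : seq I) (F : I -> V) :
  (forall x y, f (x + y) = f x + f y) -> f (\sum_(i <- s) F i) = \sum_(i <- s) f (F i).
Proof.
move=> H; elim: s => [|a s IH]; first by rewrite !big_nil (additive0 H).
by rewrite !big_cons H IH.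
Qed.

Lemma eq_sum_in (V : zmodType) (I : Type) (s : seq I) (F H : I -> V) :
  (forall i, List.In i s -> F i = H i) -> \sum_(i <- s) F i = \sum_(i <- s) H i.
Proof.
elim: s => [|a s IH] Hs; first by rewrite !big_nil.
rewrite !big_cons Hs; last by left.
by rewrite IH // => i Hi; apply: Hs; right.
Qed.

Definition dl (I : Type) (V : zmodType) (e : I) (z : V) (i : I) : V :=
  if excluded_middle_informative (i = e) then z else 0.

Lemma dl_same (I : Type) (V : zmodType) (e : I) (z : V) : dl e z e = z.
Proof. by rewrite /dl; case: excluded_middle_informative. Qed.

Lemma dl_sum (I : Type) (V : zmodType) (s : seq I) (e : I) (z : V) :
  List.NoDup s -> List.In e s -> \sum_(i <- s) dl e z i = z.
Proof.
move=> Hnd Hi; rewrite (sum_single Hnd Hi) ?dl_same // => i _ Hie.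
by rewrite /dl; case: excluded_middle_informative.
Qed.

Section G.
Variable G : groupoid.
Lemma id_d (e : G) : is_identity e -> gd e = e.
Proof. by case=> g ->; exact: gd_d. Qed.
Lemma id_r (e : G) : is_identity e -> gr e = e.
Proof. by case=> g ->; exact: gr_d. Qed.
Lemma id_mul (e : G) : is_identity e -> gmul e e = e.
Proof. move=> He; have := gmul_d e; by rewrite id_d. Qed.
Lemma r_identity (g : G) : is_identity (gr g).
Proof. by exists (ginv g); rewrite gd_inv. Qed.
Lemma d_identity (g : G) : is_identity (gd g).
Proof. by exists g. Qed.
End G.

Theorem proposition2p2 (K : comPzRingType) (R : algType K) (G : groupoid)
    (s : seq G) (Hs : enumerates_identities s) :
  (exists (E : G -> R -> Prop) (beta : G -> R -> R),
      is_groupoid_action E beta /\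
      (forall e, is_identity e -> is_unital_ideal (E e)) /\
      internal_direct_sum s E)
  <->
  (exists L : G -> R -> R, is_KG_module_algebra s L).
Proof.
case: Hs => Hnd Hin.
split.
- case=> E [beta [[HI [HEr [Hmap [Hbam [HbK [Hinj [Hsurj [Hid Hcomp]]]]]]]] [Hunit [Hex Hindep]]]].
  have Einv : forall g x, E (ginv g) x <-> E (gd g) x.
    by move=> g x; rewrite HEr gr_inv.
  have E0 : forall g, E g 0 by move=> g; case: (HI g).
  have EA : forall g x y, E g x -> E g y -> E g (x + y) by move=> g; case: (HI g).
  have EN : forall g x, E g x -> E g (- x) by move=> g; case: (HI g).
  have EL : forall g a x, E g x -> E g (a * x) by move=> g; case: (HI g).
  have ER : forall g a x, E g x -> E g (x * a) by move=> g; case: (HI g).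
  have beta0 : forall g, beta g 0 = 0.
    move=> g; have H := (Hbam g 0 0 (E0 _) (E0 _)).1; rewrite addr0 in H.
    by apply: (addrI (beta g 0)); rewrite -H addr0.
  have Hu : forall e : G, {u : R | is_identity e -> E e u /\
                 forall x, E e x -> u * x = x /\ x * u = x}.
    move=> e; apply: constructive_indefinite_description.
    case: (classic (is_identity e)) => He.
    + case: (Hunit e He) => u Hu1 Hu2; by exists u.
    + by exists 0.
  pose u e := proj1_sig (Hu e).
  have uP : forall e, is_identity e -> E e (u e) /\
                 forall x, E e x -> u e * x = x /\ x * u e = x.
    by move=> e; exact: (proj2_sig (Hu e)).
  have Dis : forall e f z, is_identity e -> is_identity f -> e <> f ->
      E e z -> E f z -> z = 0.
    move=> e f z He Hf Hef Hze Hzf.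
    have Hes : List.In e s by apply/Hin.
    have Hfs : List.In f s by apply/Hin.
    have: dl e z e + dl f (- z) e = 0.
      apply: (Hindep (fun i => dl e z i + dl f (- z) i)) => //.
      + move=> i Hi; apply: EA; rewrite /dl.
        * by case: excluded_middle_informative => Hi'; [subst|exact: E0].
        * case: excluded_middle_informative => Hi'; last exact: E0.
          by subst; apply: EN.
      + by rewrite big_split /= !dl_sum // subrr.
    rewrite dl_same /dl; case: excluded_middle_informative => Hfe.
      by case: Hef.
    by rewrite addr0.
  have comp : forall e x f, is_identity e -> (forall i, List.In i s -> E i (f i)) ->
      x = \sum_(i <- s) f i -> u e * x = f e /\ x * u e = f e.
    move=> e x f He Hf ->.
    have Hes : List.In e s by apply/Hin.
    have [Eu Hue] := uP e He.
    split.
    + rewrite mulr_sumr (sum_single Hnd Hes); first by rewrite (Hue _ (Hf e Hes)).1.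
      move=> i Hi Hie; apply: (Dis e i) => //; first by apply/Hin.
      * by move=> H; apply: Hie.
      * by apply: ER.
      * by apply: EL; apply: Hf.
    + rewrite mulr_suml (sum_single Hnd Hes); first by rewrite (Hue _ (Hf e Hes)).2.
      move=> i Hi Hie; apply: (Dis e i) => //; first by apply/Hin.
      * by move=> H; apply: Hie.
      * by apply: EL.
      * by apply: ER; apply: Hf.
  have ucomm : forall e x, is_identity e -> u e * x = x * u e.
    move=> e x He; case: (Hex x) => f [Hf Hx].
    by have [-> ->] := comp e x f He Hf Hx.
  have Eu : forall g x, E (ginv g) (u (gd g) * x).
    move=> g x; apply/Einv; apply: ER; exact: (uP (gd g) (d_identity g)).1.
  exists (fun g x => beta g (u (gd g) * x)).
  split; [|split; [|split; [|split; [|split; [|split]]]]].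
  + by move=> g x y; rewrite mulrDr (Hbam g _ _ (Eu g x) (Eu g y)).1.
  + by move=> g k x; rewrite -scalerAr (HbK g k _ (Eu g x)).
  + move=> g h x Hgh /=.
    have Ey : E (gd g) (beta h (u (gd h) * x)).
      by rewrite Hgh; apply/(HEr h); apply: Hmap; exact: Eu.
    rewrite ((uP _ (d_identity g)).2 _ Ey).1.
    by rewrite (gd_mul Hgh) (Hcomp g h _ Hgh (Eu h x)).
  + move=> g h x Hne /=.
    have Ey : E (gr h) (beta h (u (gd h) * x)).
      by apply/(HEr h); apply: Hmap; exact: Eu.
    rewrite (Dis (gd g) (gr h) (u (gd g) * beta h (u (gd h) * x))) //.
    * exact: d_identity.
    * exact: r_identity.
    * by apply: ER; exact: (uP (gd g) (d_identity g)).1.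
    * by apply: EL.
  + move=> x; case: (Hex x) => f [Hf Hx].
    rewrite {2}Hx; apply: eq_sum_in => e Hes.
    have He : is_identity e by apply/Hin.
    rewrite id_d // Hid //; first by have [-> _] := comp e x f He Hf Hx.
    by apply: ER; exact: (uP e He).1.
  + move=> g x y /=.
    rewrite -(Hbam g _ _ (Eu g x) (Eu g y)).2; congr (beta g _).
    have Hc := ucomm (gd g) x (d_identity g).
    have Huu : u (gd g) * u (gd g) = u (gd g).
      by have [H1 H2] := uP (gd g) (d_identity g); rewrite (H2 _ H1).1.
    rewrite [in RHS]mulrA -[in RHS](mulrA _ x) -[in RHS]Hc [in RHS]mulrA Huu.
    by rewrite -mulrA.
  + move=> g /=; rewrite !mulr1 gd_r.
    have [Ew Hw] := uP (gr g) (r_identity g).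
    have [Ev0 Hv0] := uP (gd g) (d_identity g).
    rewrite (Hid (gr g) _ (r_identity g) Ew).
    set w := u (gr g); set v := beta g (u (gd g)).
    have Ev : E (gr g) v by apply/(HEr g); apply: Hmap; apply/Einv.
    have wv : w * v = v by exact: (Hw _ Ev).1.
    have Ew' : E g w by apply/(HEr g).
    case: (Hsurj g w Ew') => x Ex Hx.
    have vw : v * w = w.
      rewrite -Hx -(Hbam g _ _ _ Ex).2; last by apply/Einv.
      by rewrite ((Hv0 x (proj1 (Einv g x) Ex)).1).
    by rewrite -wv ucomm ?vw //; exact: r_identity.
- case=> L [HA [HK [HC [HZ [HU [HM H1]]]]]].
  have L0 : forall g, L g 0 = 0 by move=> g; apply: additive0.
  have LN : forall g x, L g (- x) = - L g x by move=> g; apply: additiveN.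
  have LLe : forall e x, is_identity e -> L e (L e x) = L e x.
    by move=> e x He; rewrite HC ?id_mul ?id_d ?id_r.
  have LLne : forall e f x, is_identity e -> is_identity f -> e <> f -> L e (L f x) = 0.
    by move=> e f x He Hf Hef; rewrite HZ // id_d // id_r.
  have Lml : forall e a x, is_identity e -> L e x = x -> L e (a * x) = a * x.
    move=> e a x He Hx.
    rewrite -{2}(HU (a * x)) (sum_single (e:=e) Hnd) //; first by apply/Hin.
    move=> h Hh Hhe; rewrite HM -Hx LLne ?mulr0 //; by apply/Hin.
  have Lmr : forall e a x, is_identity e -> L e x = x -> L e (x * a) = x * a.
    move=> e a x He Hx.
    rewrite -{2}(HU (x * a)) (sum_single (e:=e) Hnd) //; first by apply/Hin.
    move=> h Hh Hhe; rewrite HM -Hx LLne ?mul0r //; by apply/Hin.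
  exists (fun g x => L (gr g) x = x), L.
  split; [|split].
  + split; [|split; [|split; [|split; [|split; [|split; [|split; [|split]]]]]]].
    * move=> g; have He := r_identity g.
      split.
      -- exact: L0.
      -- by move=> x y Hx Hy; rewrite /= HA Hx Hy.
      -- by move=> x /= Hx; rewrite LN Hx.
      -- by move=> a x /= Hx; apply: Lml.
      -- by move=> a x /= Hx; apply: Lmr.
    * by move=> g x /=; rewrite gr_r.
    * move=> g x /= Hx; rewrite HC ?gd_r // gr_mul_l //.
    * by move=> g x y _ _; rewrite HA HM.
    * by move=> g k x _; rewrite HK.
    * move=> g x y /= Hx Hy Hxy.
      rewrite gr_inv in Hx Hy.
      rewrite -Hx -Hy.
      have E1 : forall z, L (ginv g) (L g z) = L (gd g) z.
        by move=> z; rewrite HC ?gd_inv // -gd_def.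
      by rewrite -!E1 Hxy.
    * move=> g y /= Hy; exists (L (ginv g) y).
      -- rewrite gr_inv HC; last by rewrite gd_d gr_inv.
         by have := gr_mul_l (ginv g); rewrite gr_inv => ->.
      -- by rewrite HC -?gr_def ?gr_inv ?gd_inv.
    * by move=> e x He /=; rewrite id_r.
    * by move=> g h x Hgh _; rewrite HC.
  + move=> e He; exists (L e 1).
    * by rewrite /= id_r // LLe.
    * move=> x /=; rewrite id_r // => Hx.
      by split; rewrite -[in LHS]Hx -HM ?mul1r ?mulr1 Hx.
  + split.
    * move=> x; exists (fun e => L e x); split; last by rewrite HU.
      move=> i Hi; have Hi' : is_identity i by apply/Hin.
      by rewrite /= id_r // LLe.
    * move=> f Hf Hsum i Hi.
      have Hi' : is_identity i by apply/Hin.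
      have := Hf i Hi; rewrite /= id_r // => <-.
      have := congr1 (L i) Hsum; rewrite L0 additive_sum //.
      rewrite (sum_single Hnd Hi) // => j Hj Hji.
      have Hj' : is_identity j by apply/Hin.
      have := Hf j Hj; rewrite /= id_r // => <-.
      by rewrite LLne // => Hij; apply: Hji.
Qed.
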